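(* For every $i\in\{1,\dots,n\}$, in ${\mathcal U}_D^{\ge0}\otimes{\mathcal U}_D^{\ge0}$, $$\Delta(x_i)=K_{-\deg(x_i)}\otimes x_i+x_i\otimes1+\hat q\sum_{j=i+1}^nE_{j\downarrow i+1}K_{-\deg(x_j)}\otimes x_j,$$ $$\Delta(y_i)=K_{-\deg(y_i)}\otimes y_i+y_i\otimes1+\hat q\Big(\sum_{j=1}^n\epsilon_{ij}K_{-\deg(x_j)}\otimes x_j+\sum_{j=1}^{i-1}E_{j+1\uparrow i}K_{-\deg(y_j)}\otimes y_j\Big).$$
   Context: Let $k$ be an algebraically closed field of characteristic $0$ and $q\in k^\times$ not a root of unity; $\hat q=q-q^{-1}$; $n\ge3$. Let $Q(D_{n+1})$ be the lattice of $(a_1,\dots,a_{n+1})\in\mathbb Z^{n+1}$ with even coordinate sum, standard inner product, simple roots $\alpha_1=e_1+e_2$, $\alpha_i=e_i-e_{i-1}$ ($2\le i\le n+1$), reflections $s_i$. Write $[u,v]=uv-q^{-1}vu$. ${\mathcal U}_q(\mathfrak{so}_{2n+2})$ is generated by $E_i,F_i,K_\mu$ with the standard relations ($K_0=1$, $K_\mu K_\lambda=K_{\mu+\lambda}$, $K_\mu E_iK_{-\mu}=q^{\langle\mu,\alpha_i\rangle}E_i$, $K_\mu F_iK_{-\mu}=q^{-\langle\mu,\alpha_i\rangle}F_i$, $E_iE_j=E_jE_i$ if $\langle\alpha_i,\alpha_j\rangle\in\{0,2\}$, $E_i[E_i,E_j]=q[E_i,E_j]E_i$ if $\langle\alpha_i,\alpha_j\rangle=-1$,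 same for $F$'s, $E_iF_j-F_jE_i=\delta_{ij}(K_{\alpha_i}-K_{-\alpha_i})/\hat q$), Hopf structure $\Delta(E_i)=K_{-\alpha_i}\otimes E_i+E_i\otimes1$, $\Delta(K_\mu)=K_\mu\otimes K_\mu$, and Lusztig automorphisms $T_i$ ($T_iK_\mu=K_{s_i\mu}$, $T_iE_i=-F_iK_{\alpha_i}$, $T_iE_j=E_j$ if $\langle\alpha_i,\alpha_j\rangle=0$, $T_iE_j=E_iE_j-q^{-1}E_jE_i$ if $\langle\alpha_i,\alpha_j\rangle=-1$). ${\mathcal U}_D^{\ge0}$ is the Hopf subalgebra generated by all $E_i$ and $K_\mu$. Root vectors of $w_n=(s_{n+1}\cdots s_1)(s_3\cdots s_{n+1})$ (defined via $X_{\beta_\ell}=T_{i_1}\cdots T_{i_{\ell-1}}E_{i_\ell}$ for the reduced word $s_{i_1}\cdots s_{i_{2n}}$) are $x_i=X_{e_{n+1}-e_i}$, $y_i=X_{e_{n+1}+e_i}$, with degrees $\deg(x_i)=e_{n+1}-e_i$, $\deg(y_i)=e_{n+1}+e_i$; they satisfy $x_n=E_{n+1}$, $x_i=[x_{i+1},E_{i+1}]$, $y_1=[x_2,E_1]$, $y_{i+1}=[y_i,E_{i+1}]$. For $r\ge s$ in $\{1,\dots,n+1\}$ define $E_{r\downarrow r}=E_r$, $E_{r\downarrow s}=[E_{r\downarrow s+1},E_s]$ ($r\ne s$), $E_{s\uparrow s}=E_s$, $E_{s\uparrow r}=[E_{s\uparrow r-1},E_r]$ ($r\ne s$). For $i,j\in\{1,\dots,n\}$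 define $\epsilon_{11}=0$, $\epsilon_{1j}=T_jT_{j-1}\cdots T_2E_1$ ($j\ne1$), and $\epsilon_{i+1,j}=[\epsilon_{ij},E_{i+1}]$ if $j\ne i,i+1$; $\epsilon_{i+1,i+1}=q\epsilon_{i,i+1}E_{i+1}-q^{-1}E_{i+1}\epsilon_{i,i+1}$; $\epsilon_{i+1,i}=\epsilon_{i,i+1}+q^{-1}(\epsilon_{ii}E_{i+1}-E_{i+1}\epsilon_{ii})$. *)

(* Defs.v *)
From HB Require Import structures.
From mathcomp Require Import all_boot all_order all_algebra.
Set Implicit Arguments. Unset Strict Implicit. Unset Printing Implicit Defensive.
Import Order.TTheory GRing.Theory Num.Theory.
Local Open Scope ring_scope.

(* Weights: vectors in Z^{n+1}; coordinate e_i (1 <= i <= n+1) is the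
   ordinal i-1 of 'I_(n+1). *)
Definition wt (n : nat) := {ffun 'I_n.+1 -> int}.

Definition ev (n i : nat) : wt n :=
  [ffun j : 'I_n.+1 => ((val j == i.-1 : bool) : nat)%:Z].

Definition alpha (n i : nat) : wt n :=
  if i == 1%N then ev n 1 + ev n 2 else ev n i - ev n i.-1.

Definition ip (n : nat) (mu la : wt n) : int := \sum_(j < n.+1) mu j * la j.

(* membership in the root lattice Q(D_{n+1}): even coordinate sum *)
Definition inQ (n : nat) (mu : wt n) : bool := (2 %| \sum_(j < n.+1) mu j)%Z.

Definition refl (n i : nat) (mu : wt n) : wt n :=
  mu - alpha n i *~ ip mu (alpha n i).

Definition degx (n i : nat) : wt n := ev n n.+1 - ev n i.
Definition degy (n i : nat) : wt n := ev n n.+1 + ev n i.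

Section Uq.
Variables (k : fieldType) (A : algType k) (q : k) (n : nat).
Variables (E F : nat -> A) (K : wt n -> A).

Definition br (u v : A) : A := u * v - q^-1 *: (v * u).

Definition qhat : k := q - q^-1.

Definition in_rng (i : nat) : bool := (1 <= i <= n.+1)%N.

Definition UqD_rels : Prop :=
  [/\ K 0 = 1,
      forall mu la, inQ mu -> inQ la -> K (mu + la) = K mu * K la,
      forall mu i, inQ mu -> in_rng i ->
        K mu * E i * K (- mu) = q ^ (ip mu (alpha n i)) *: E i,
      forall mu i, inQ mu -> in_rng i ->
        K mu * F i * K (- mu) = q ^ (- ip mu (alpha n i)) *: F i
    & [/\ forall i j, in_rng i -> in_rng j ->
        (ip (alpha n i) (alpha n j) == 0) || (ip (alpha n i) (alpha n j) == 2) ->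
        (E i * E j = E j * E i /\ F i * F j = F j * F i),
      forall i j, in_rng i -> in_rng j -> ip (alpha n i) (alpha n j) = -1 ->
        (E i * br (E i) (E j) = q *: (br (E i) (E j) * E i) /\
         F i * br (F i) (F j) = q *: (br (F i) (F j) * F i))
    & forall i j, in_rng i -> in_rng j ->
        E i * F j - F j * E i =
        if i == j then qhat^-1 *: (K (alpha n i) - K (- alpha n i)) else 0]].

Variable T : nat -> A -> A.

Definition lusztig_rels : Prop :=
  forall i, in_rng i ->
  [/\ forall mu, inQ mu -> T i (K mu) = K (refl i mu),
      T i (E i) = - (F i * K (alpha n i)),
      forall j, in_rng j -> ip (alpha n i) (alpha n j) = 0 -> T i (E j) = E j
    & forall j, in_rng j -> ip (alpha n i) (alpha n j) = -1 ->
        T i (E j) = E i * E j - q^-1 *: (E j * E i)].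

(* root vectors: x_n = E_{n+1}, x_i = [x_{i+1}, E_{i+1}] (by recursion on n-i) *)
Fixpoint xrec (d : nat) : A :=
  match d with
  | 0 => E n.+1
  | d'.+1 => br (xrec d') (E (n - d'))
  end.
Definition xv (i : nat) : A := xrec (n - i).

Fixpoint yrec (m : nat) : A :=
  match m with
  | 0 => br (xv 2) (E 1)
  | m'.+1 => br (yrec m') (E m'.+2)
  end.
Definition yv (i : nat) : A := yrec i.-1.

(* E_{r down s}, with d = r - s *)
Fixpoint Edn (r d : nat) : A :=
  match d with
  | 0 => E r
  | d'.+1 => br (Edn r d') (E (r - d))
  end.
Definition Edown (r s : nat) : A := Edn r (r - s).

(* E_{s up r}, with d = r - s *)
Fixpoint Eupr (s d : nat) : A :=
  match d with
  | 0 => E s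
  | d'.+1 => br (Eupr s d') (E (s + d))
  end.
Definition Eup (s r : nat) : A := Eupr s (r - s).

Fixpoint Tchain (j : nat) (a : A) : A :=
  match j with
  | 0 | 1 => a
  | j'.+1 => T j (Tchain j' a)
  end.

(* epsF m j = epsilon_{m+1, j} *)
Fixpoint epsF (m : nat) (j : nat) : A :=
  match m with
  | 0 => if j == 1%N then 0 else Tchain j (E 1)
  | m'.+1 =>
      (* here i = m, so epsF m' = epsilon_{i,.}, result is epsilon_{i+1,j} *)
      let i := m in
      if j == i.+1 then
        q *: (epsF m' i.+1 * E i.+1) - q^-1 *: (E i.+1 * epsF m' i.+1)
      else if j == i then
        epsF m' i.+1 + q^-1 *: (epsF m' i * E i.+1 - E i.+1 * epsF m' i)
      else br (epsF m' j) (E i.+1)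
  end.
Definition eps (i j : nat) : A := epsF i.-1 j.

End Uq.

(* Main.v *)
Require Import Defs.
From HB Require Import structures.
From mathcomp Require Import all_boot all_order all_algebra.
From mathcomp Require Import ring zify.
Set Implicit Arguments. Unset Strict Implicit. Unset Printing Implicit Defensive.
Import Order.TTheory GRing.Theory Num.Theory.
Local Open Scope ring_scope.

Import GRing.Theory.

Section NC.
Variables (k : fieldType) (A : algType k).

Inductive nexp : Type :=
 | NAt of nat | NSc of k & nexp | NAdd of nexp & nexp | NMul of nexp & nexp
 | NOpp of nexp | NZ | NOne.

Fixpoint den (env : seq A) (e : nexp) : A :=
  match e with
  | NAt i => nth 0 env i
  | NSc c e => c *: den env e
  | NAdd e1 e2 => den env e1 + den env e2
  | NMul e1 e2 => den env e1 * den env e2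
  | NOpp e => - den env e
  | NZ => 0
  | NOne => 1
  end.

Fixpoint weq (w1 w2 : seq nat) : bool :=
  match w1, w2 with
  | nil, nil => true
  | a :: w1', b :: w2' => Nat.eqb a b && weq w1' w2'
  | _, _ => false
  end.

Lemma weqP w1 w2 : reflect (w1 = w2) (weq w1 w2).
Proof.
elim: w1 w2 => [|a w1 IH] [|b w2] /=; try by constructor.
case: (PeanoNat.Nat.eqb_spec a b) => [->|h] /=; last by constructor; case.
by case: IH => [->|h]; constructor; [|case].
Qed.

Fixpoint wmem (w : seq nat) (s : seq (seq nat)) : bool :=
  match s with nil => false | w' :: s' => weq w w' || wmem w s' end.

Fixpoint wundup (s : seq (seq nat)) : seq (seq nat) :=
  match s with nil => nil | w :: s' => if wmem w s' then wundup s' else w :: wundup s' end.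

Fixpoint pmap2 (f : k * seq nat -> k * seq nat) (p : seq (k * seq nat)) :=
  match p with nil => nil | m :: p' => f m :: pmap2 f p' end.

Fixpoint papp (p1 p2 : seq (k * seq nat)) :=
  match p1 with nil => p2 | m :: p' => m :: papp p' p2 end.

Fixpoint wapp (w1 w2 : seq nat) :=
  match w1 with nil => w2 | a :: w' => a :: wapp w' w2 end.

Fixpoint pmul (p1 p2 : seq (k * seq nat)) :=
  match p1 with
  | nil => nil
  | m :: p' => papp (pmap2 (fun m2 => (m.1 * m2.1, wapp m.2 m2.2)) p2) (pmul p' p2)
  end.

Fixpoint toP (e : nexp) : seq (k * seq nat) :=
  match e with
  | NAt i => [:: (1, [:: i])]
  | NSc c e => pmap2 (fun m => (c * m.1, m.2)) (toP e)
  | NAdd e1 e2 => papp (toP e1) (toP e2)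
  | NMul e1 e2 => pmul (toP e1) (toP e2)
  | NOpp e => pmap2 (fun m => (- m.1, m.2)) (toP e)
  | NZ => nil
  | NOne => [:: (1, nil)]
  end.

Fixpoint wsnd (p : seq (k * seq nat)) : seq (seq nat) :=
  match p with nil => nil | m :: p' => m.2 :: wsnd p' end.

Fixpoint coef (p : seq (k * seq nat)) (w : seq nat) : k :=
  match p with nil => 0 | m :: p' => (if weq m.2 w then m.1 else 0) + coef p' w end.

Fixpoint allc (p1 p2 : seq (k * seq nat)) (s : seq (seq nat)) : Prop :=
  match s with nil => True | w :: s' => coef p1 w = coef p2 w /\ allc p1 p2 s' end.

Variable env : seq A.
Fixpoint evw (w : seq nat) : A :=
  match w with nil => 1 | a :: w' => nth 0 env a * evw w' end.
Fixpoint evp (p : seq (k * seq nat)) : A :=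
  match p with nil => 0 | m :: p' => m.1 *: evw m.2 + evp p' end.

Lemma evw_app w1 w2 : evw (wapp w1 w2) = evw w1 * evw w2.
Proof. by elim: w1 => [|a w IH] /=; rewrite ?mul1r // IH mulrA. Qed.
Lemma evp_app p1 p2 : evp (papp p1 p2) = evp p1 + evp p2.
Proof. by elim: p1 => [|m p IH] /=; rewrite ?add0r // IH addrA. Qed.
Lemma evp_sc c p : evp (pmap2 (fun m => (c * m.1, m.2)) p) = c *: evp p.
Proof. by elim: p => [|m p IH] /=; rewrite ?scaler0 // IH scalerDr scalerA. Qed.
Lemma evp_opp p : evp (pmap2 (fun m => (- m.1, m.2)) p) = - evp p.
Proof. by elim: p => [|m p IH] /=; rewrite ?oppr0 // IH opprD scaleNr. Qed.
Lemma evp_mul p1 p2 : evp (pmul p1 p2) = evp p1 * evp p2.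
Proof.
elim: p1 => [|m p IH] /=; first by rewrite mul0r.
rewrite evp_app IH mulrDl; congr (_ + _).
elim: p2 {IH} => [|m2 p2 IH2] /=; first by rewrite mulr0.
by rewrite mulrDr IH2 evw_app -scalerAl -scalerAr -scalerAl scalerA mulrC.
Qed.
Lemma toP_ok e : evp (toP e) = den env e.
Proof.
elim: e => [i|c e IH|e1 IH1 e2 IH2|e1 IH1 e2 IH2|e IH||] /=.
- by rewrite scale1r mulr1 addr0.
- by rewrite evp_sc IH.
- by rewrite evp_app IH1 IH2.
- by rewrite evp_mul IH1 IH2.
- by rewrite evp_opp IH.
- by [].
- by rewrite scale1r addr0.
Qed.

Lemma wmemP w s : reflect (w \in s) (wmem w s).
Proof.
elim: s => [|w' s IH] /=; first by constructor.
rewrite in_cons; case: (weqP w w') => [->|h] /=; first by rewrite eqxx; constructor.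
have -> : (w == w') = false by apply/eqP.
exact: IH.
Qed.

Lemma wundup_mem w s : (w \in wundup s) = (w \in s).
Proof.
elim: s => [|w' s IH] //=.
case: (wmemP w' s) => h; rewrite !in_cons IH //.
by case: eqP => // ->.
Qed.
Lemma wundup_uniq s : uniq (wundup s).
Proof.
elim: s => [|w' s IH] //=.
by case: (wmemP w' s) => h //=; rewrite wundup_mem (negPf (introN idP h)) IH.
Qed.

Lemma evp_coef p s : uniq s -> {subset wsnd p <= s} ->
  evp p = \sum_(w <- s) coef p w *: evw w.
Proof.
move=> us; elim: p => [|m p IH] /= sub.
  by rewrite big1 // => w _; rewrite scale0r.
rewrite IH; last by move=> w h; apply: sub; rewrite in_cons h orbT.
rewrite [RHS](eq_bigr (fun w => (if weq m.2 w then m.1 else 0) *: evw w + coef p w *: evw w));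
  last by move=> w _; rewrite /= scalerDl.
rewrite big_split /=; congr (_ + _).
have ms : m.2 \in s by apply: sub; rewrite in_cons eqxx.
rewrite (bigD1_seq m.2) //= big1 ?addr0; first by have -> : weq m.2 m.2 by apply/weqP.
move=> w /negPf h; case: (weqP m.2 w) => [e|_]; last by rewrite scale0r.
by move: h; rewrite e eqxx.
Qed.

Lemma allcP p1 p2 s : allc p1 p2 s -> forall w, w \in s -> coef p1 w = coef p2 w.
Proof.
elim: s => [|w' s IH] //= [h1 h2] w; rewrite in_cons; case/orP => [/eqP -> //|].
exact: IH.
Qed.

Lemma nc_eq e1 e2 :
  allc (toP e1) (toP e2) (wundup (wsnd (toP e1) ++ wsnd (toP e2))) ->
  den env e1 = den env e2.
Proof.
move=> h; set s := wundup _ in h.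
have us : uniq s by exact: wundup_uniq.
rewrite -!toP_ok (evp_coef (p := toP e1) us); last first.
  by move=> w hw; rewrite wundup_mem mem_cat hw.
rewrite (evp_coef (p := toP e2) us); last first.
  by move=> w hw; rewrite wundup_mem mem_cat hw orbT.
rewrite big_seq_cond [RHS]big_seq_cond; apply: eq_bigr => w; rewrite andbT => hw; by rewrite (allcP h hw).
Qed.
End NC.

Ltac same x y := constr:(ltac:(tryif unify x y then exact true else exact false)).
Ltac inList x ls :=
  lazymatch ls with
    | nil => constr:(false)
    | ?y :: ?ls' => let b := same x y in
        lazymatch b with true => constr:(true) | false => inList x ls' end
  end.
Ltac addToList x ls :=
  let b := inList x ls in
    lazymatch b with
      | true => ls
      | false => constr:(x :: ls)
    end.
Ltac lookup x ls :=
  lazymatch ls with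
    | ?y :: ?ls' => let b := same x y in
        lazymatch b with true => constr:(O) | false => let n := lookup x ls' in constr:(S n) end
  end.

Ltac atoms t acc :=
  match t with
  | (?x + ?y) => let acc := atoms x acc in atoms y acc
  | (?x * ?y) => let acc := atoms x acc in atoms y acc
  | (- ?x) => atoms x acc
  | (_ *: ?x) => atoms x acc
  | 0 => acc
  | 1 => acc
  | _ => addToList t acc
  end.

Ltac reif K t env :=
  match t with
  | (?x + ?y) => let a := reif K x env in let b := reif K y env in constr:(NAdd a b)
  | (?x * ?y) => let a := reif K x env in let b := reif K y env in constr:(NMul a b)
  | (- ?x) => let a := reif K x env in constr:(NOpp a)
  | (?c *: ?x) => let a := reif K x env in constr:(NSc c a)
  | 0 => constr:(@NZ K)
  | 1 => constr:(@NOne K)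
  | _ => let n := lookup t env in constr:(@NAt K n)
  end.

Ltac nc_reify K :=
  match goal with
  | |- @eq ?T ?l ?r =>
    let env0 := atoms l (@nil T) in
    let env := atoms r env0 in
    let el := reif K l env in
    let er := reif K r env in
    change (den env el = den env er)
  end.

Ltac nc_solve K :=
  nc_reify K; apply: nc_eq;
  cbv beta iota zeta delta [allc coef toP wundup wmem weq wsnd cat pmap2 papp pmul wapp Nat.eqb fst snd andb orb];
  repeat split.


Section W.
Variable n : nat.
Implicit Types mu la : wt n.

Lemma wD mu la j : (mu + la) j = mu j + la j.
Proof. by rewrite /GRing.add /= ffunE. Qed.
Lemma wN mu j : (- mu) j = - mu j.
Proof. by rewrite /GRing.opp /= ffunE. Qed.
Lemma w0 j : (0 : wt n) j = 0.
Proof. by rewrite /GRing.zero /= ffunE. Qed.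
Lemma wB mu la j : (mu - la) j = mu j - la j.
Proof. by rewrite wD wN. Qed.

Lemma ipDl mu la nu : ip (mu + la) nu = ip mu nu + ip la nu.
Proof. by rewrite /ip -big_split /=; apply: eq_bigr => j _; rewrite wD mulrDl. Qed.
Lemma ipDr mu la nu : ip nu (mu + la) = ip nu mu + ip nu la.
Proof. by rewrite /ip -big_split /=; apply: eq_bigr => j _; rewrite wD mulrDr. Qed.
Lemma ipNl mu nu : ip (- mu) nu = - ip mu nu.
Proof. by rewrite /ip -sumrN; apply: eq_bigr => j _; rewrite wN mulNr. Qed.
Lemma ipNr mu nu : ip nu (- mu) = - ip nu mu.
Proof. by rewrite /ip -sumrN; apply: eq_bigr => j _; rewrite wN mulrN. Qed.
Lemma ipBl mu la nu : ip (mu - la) nu = ip mu nu - ip la nu.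
Proof. by rewrite ipDl ipNl. Qed.
Lemma ipBr mu la nu : ip nu (mu - la) = ip nu mu - ip nu la.
Proof. by rewrite ipDr ipNr. Qed.
Lemma ip0r nu : ip nu (0 : wt n) = 0.
Proof. by rewrite /ip big1 // => j _; rewrite w0 mulr0. Qed.

Lemma ip_ev a b : (a.-1 < n.+1)%N -> ip (ev n a) (ev n b) = ((a.-1 == b.-1 : bool) : nat)%:Z.
Proof.
move=> ha; rewrite /ip (bigD1 (Ordinal ha)) //= big1 ?addr0.
  by rewrite !ffunE /= eqxx mul1r.
move=> j /eqP hj; rewrite !ffunE.
have -> : (val j == a.-1) = false by apply/eqP => e; apply: hj; apply: val_inj.
by rewrite mul0r.
Qed.

Definition sw mu : int := \sum_(j < n.+1) mu j.
Lemma swD mu la : sw (mu + la) = sw mu + sw la.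
Proof. by rewrite /sw -big_split; apply: eq_bigr => j _; rewrite wD. Qed.
Lemma swN mu : sw (- mu) = - sw mu.
Proof. by rewrite /sw -sumrN; apply: eq_bigr => j _; rewrite wN. Qed.
Lemma sw_ev a : (a.-1 < n.+1)%N -> sw (ev n a) = 1.
Proof.
move=> ha; rewrite /sw (bigD1 (Ordinal ha)) //= big1 ?addr0.
  by rewrite !ffunE /= eqxx.
move=> j /eqP hj; rewrite !ffunE.
by have -> : (val j == a.-1) = false by apply/eqP => e; apply: hj; apply: val_inj.
Qed.
Lemma inQE mu : inQ mu = (2 %| sw mu)%Z.
Proof. by []. Qed.
Lemma inQD mu la : inQ mu -> inQ la -> inQ (mu + la).
Proof. by rewrite !inQE swD => h1 h2; exact: rpredD. Qed.
Lemma inQN mu : inQ mu -> inQ (- mu).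
Proof. by rewrite !inQE swN rpredN. Qed.
Lemma inQ_evB a b : (a.-1 < n.+1)%N -> (b.-1 < n.+1)%N -> inQ (ev n a - ev n b).
Proof. by move=> ha hb; rewrite inQE swD swN !sw_ev // subrr dvdz0. Qed.
Lemma inQ_evD a b : (a.-1 < n.+1)%N -> (b.-1 < n.+1)%N -> inQ (ev n a + ev n b).
Proof. by move=> ha hb; rewrite inQE swD !sw_ev. Qed.
Lemma inQ0 : inQ (0 : wt n).
Proof. by rewrite inQE /sw big1 // => j _; rewrite w0. Qed.
End W.

Section G.
Variables (k : fieldType) (A : algType k) (q : k).
Hypothesis hq : q != 0.
Ltac fld := field; try done; try exact hq.
Definition Sr (u a : A) : A := u * a * a - (q + q^-1) *: (a * u * a) + a * a * u.

Lemma G1 (a b : A) : a * br q a b = q *: (br q a b * a) -> Sr b a = 0.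
Proof.
move=> h; have e : Sr b a = a * br q a b - q *: (br q a b * a).
  rewrite /Sr /br; nc_solve k; fld.
by rewrite e h subrr.
Qed.

Lemma G2 (u a : A) : Sr u a = 0 -> br q u a * a = q *: (a * br q u a).
Proof.
move=> h; apply/eqP; rewrite -subr_eq0; apply/eqP; rewrite -h /Sr /br.
nc_solve k; fld.
Qed.

Lemma G3 (X a b : A) : X * a = a * X -> Sr b a = 0 -> Sr (br q X b) a = 0.
Proof.
move=> hX hb.
have e : Sr (br q X b) a = X * Sr b a - q^-1 *: (Sr b a * X)
   + (q + q^-1) *: ((X * a - a * X) * b * a) - a * (X * a - a * X) * b - (X * a - a * X) * a * b
   - q^-1 *: (b * (X * a - a * X) * a + b * a * (X * a - a * X) - (q + q^-1) *: (a * b * (X * a - a * X))).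
  rewrite /Sr /br; nc_solve k; fld.
rewrite e hb hX subrr !(mulr0, mul0r, scaler0, subr0, add0r, addr0, oppr0).
done.
Qed.

Lemma G4 (u b c : A) : u * c = c * u -> b * c = c * b -> br q u b * c = c * br q u b.
Proof.
move=> h1 h2.
have e : br q u b * c - c * br q u b = u * (b * c - c * b) + (u * c - c * u) * b
   - q^-1 *: (b * (u * c - c * u) + (b * c - c * b) * u).
  rewrite /br; nc_solve k; fld.
apply/eqP; rewrite -subr_eq0 e h1 h2 !subrr.
by rewrite !(mulr0, mul0r, scaler0, subr0, add0r, addr0, oppr0).
Qed.

Hypothesis h2 : q + q^-1 != 0.
Lemma G5 (u a b : A) : u * b = b * u -> Sr u a = 0 -> Sr b a = 0 ->
  br q (br q u a) b * a = a * br q (br q u a) b.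
Proof.
move=> hub hu hb.
have e : (q + q^-1) *: (br q (br q u a) b * a - a * br q (br q u a) b) =
  - (u * Sr b a) + q^-2 *: (Sr b a * u) + Sr u a * b - q^-2 *: (b * Sr u a)
  + q^-2 *: (a * a * (u * b - b * u)) - (1 + q^-2) *: (a * (u * b - b * u) * a)
  + (u * b - b * u) * a * a.
  rewrite /Sr /br; nc_solve k; fld.
move: e; rewrite hu hb hub subrr.
rewrite !(mulr0, mul0r, scaler0, subr0, add0r, addr0, oppr0) => /eqP.
by rewrite scaler_eq0 (negPf h2) /= subr_eq0 => /eqP.
Qed.
End G.

Ltac decb := repeat match goal with |- context [(?x == ?y :> nat)] =>
   first [ rewrite (_ : (x == y) = true); last by apply/eqP; lia
         | rewrite (_ : (x == y) = false); last by apply/eqP; lia ] end.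

Section M1.
Variable n : nat.
Hypothesis n3 : (3 <= n)%N.

Lemma alpha1 : alpha n 1 = ev n 1 + ev n 2.
Proof. by []. Qed.
Lemma alphaS i : (2 <= i)%N -> alpha n i = ev n i - ev n i.-1.
Proof. by rewrite /alpha; case: i => [|[|i]]. Qed.

Ltac ipc := rewrite ?alpha1 ?alphaS ?ipDl ?ipDr ?ipNl ?ipNr ?ip_ev; try lia; decb; simpl; lia.

Lemma ip_far i j : (2 <= i <= n.+1)%N -> (2 <= j <= n.+1)%N -> (i.+2 <= j)%N || (j.+2 <= i)%N ->
  ip (alpha n i) (alpha n j) = 0.
Proof. move=> hi hj hij; ipc. Qed.
Lemma ip_adj i : (2 <= i)%N -> (i <= n)%N ->
  ip (alpha n i.+1) (alpha n i) = -1 /\ ip (alpha n i) (alpha n i.+1) = -1.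
Proof. by move=> h1 h2; split; ipc. Qed.
Lemma ip_1j j : (4 <= j <= n.+1)%N ->
  ip (alpha n 1) (alpha n j) = 0 /\ ip (alpha n j) (alpha n 1) = 0.
Proof. by move=> h; split; ipc. Qed.
Lemma ip_12 : ip (alpha n 1) (alpha n 2) = 0 /\ ip (alpha n 2) (alpha n 1) = 0.
Proof. by split; ipc. Qed.
Lemma ip_13 : ip (alpha n 1) (alpha n 3) = -1 /\ ip (alpha n 3) (alpha n 1) = -1.
Proof. by split; ipc. Qed.
Lemma inQ_alpha i : (1 <= i <= n.+1)%N -> inQ (alpha n i).
Proof.
move=> h; case: (ltngtP i 1) => [|h2|->]; first lia.
  by rewrite alphaS //; apply: inQ_evB; lia.
by apply: inQ_evD; lia.
Qed.
End M1.

Section M2.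
Variables (k : fieldType) (q : k) (n : nat) (A : algType k) (E F : nat -> A).
Hypotheses (hq : q != 0) (hq2 : q + q^-1 != 0) (n3 : (3 <= n)%N).
Hypothesis Ecm : forall i j, in_rng n i -> in_rng n j ->
        (ip (alpha n i) (alpha n j) == 0) || (ip (alpha n i) (alpha n j) == 2) ->
        (E i * E j = E j * E i /\ F i * F j = F j * F i).
Hypothesis Ese : forall i j, in_rng n i -> in_rng n j -> ip (alpha n i) (alpha n j) = -1 ->
        (E i * br q (E i) (E j) = q *: (br q (E i) (E j) * E i) /\
         F i * br q (F i) (F j) = q *: (br q (F i) (F j) * F i)).

Ltac fld := field; try done; try exact hq.
Local Notation X := (xv q n E).
Local Notation Y := (yv q n E).

Lemma Ecomm i j : in_rng n i -> in_rng n j -> ip (alpha n i) (alpha n j) = 0 -> E i * E j = E j * E i.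
Proof. by move=> hi hj h; case: (Ecm hi hj); rewrite ?h ?eqxx. Qed.
Lemma Eserre i j : in_rng n i -> in_rng n j -> ip (alpha n i) (alpha n j) = -1 -> Sr q (E j) (E i) = 0.
Proof. by move=> hi hj h; apply: (G1 hq); case: (Ese hi hj h). Qed.

Lemma Ecomm_far i j : (2 <= i <= n.+1)%N -> (2 <= j <= n.+1)%N -> (i.+2 <= j)%N || (j.+2 <= i)%N ->
  E i * E j = E j * E i.
Proof. move=> hi hj h; apply: Ecomm; rewrite /in_rng; try lia; exact: (ip_far n3). Qed.
Lemma Ecomm_1j j : (4 <= j <= n.+1)%N -> E 1 * E j = E j * E 1.
Proof. move=> h; apply: Ecomm; rewrite /in_rng; try lia; by case: (ip_1j n3 h). Qed.

Lemma xN : X n = E n.+1.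
Proof. by rewrite /xv subnn. Qed.
Lemma xS i : (i < n)%N -> X i = br q (X i.+1) (E i.+1).
Proof.
move=> h; rewrite /xv (_ : (n - i = (n - i.+1).+1)%N); last lia.
by rewrite /= (_ : (n - (n - i.+1) = i.+1)%N) //; lia.
Qed.

Lemma x_comm m j : (1 <= m)%N -> (m < j)%N -> (j <= n)%N -> (2 <= m)%N || (3 <= j)%N ->
  X j * E m = E m * X j.
Proof.
move=> h1 h2 h3 h4.
have [d hd] : exists d, d = (n - j)%N by eexists.
elim: d j hd h2 h3 h4 => [|d IH] j hd h2 h3 h4.
  have -> : j = n by lia.
  rewrite xN; case: (leqP 2 m) => hm.
    apply: Ecomm_far; lia.
  have -> : m = 1%N by lia.
  by rewrite Ecomm_1j //; lia.
rewrite xS; last lia.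
apply: (G4 hq); first by apply: IH; lia.
case: (leqP 2 m) => hm; first by apply: Ecomm_far; lia.
have -> : m = 1%N by lia.
by rewrite Ecomm_1j //; lia.
Qed.

Lemma xSr m : (2 <= m <= n)%N -> Sr q (X m) (E m) = 0.
Proof.
move=> hm.
have [d hd] : exists d, d = (n - m)%N by eexists.
elim: d m hd hm => [|d IH] m hd hm.
  have -> : m = n by lia.
  rewrite xN; apply: Eserre; rewrite /in_rng; try lia.
  by case: (@ip_adj n n3 n) => //; lia.
rewrite xS; last lia.
apply: (G3 hq) => //.
  by rewrite x_comm //; lia.
apply: Eserre; rewrite /in_rng; try lia.
by case: (@ip_adj n n3 m) => //; lia.
Qed.

Lemma xb i : (1 <= i < n)%N -> X i * E i.+1 = q *: (E i.+1 * X i).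
Proof. by move=> h; rewrite xS; [apply: (G2 hq); apply: xSr|]; lia. Qed.

Lemma xa j i : (1 <= j)%N -> (j < i)%N -> (i < n)%N -> X j * E i.+1 = E i.+1 * X j.
Proof.
move=> h1 h2 h3.
have [d hd] : exists d, d = (i - j.+1)%N by eexists.
elim: d j hd h1 h2 => [|d IH] j hd h1 h2.
  have -> : j = i.-1 by lia.
  rewrite xS; last lia.
  rewrite (_ : i.-1.+1 = i); last lia.
  rewrite xS //.
  apply: (G5 hq hq2).
  - by rewrite x_comm //; lia.
  - by apply: xSr; lia.
  - apply: Eserre; rewrite /in_rng; try lia.
    by case: (@ip_adj n n3 i) => //; lia.
rewrite xS; last lia.
apply: (G4 hq); first by apply: IH; lia.
by apply: Ecomm_far; lia.
Qed.

Lemma y1 : Y 1 = br q (X 2) (E 1).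
Proof. by []. Qed.
Lemma yS i : (1 <= i)%N -> Y i.+1 = br q (Y i) (E i.+1).
Proof. by case: i. Qed.

Lemma yc j i : (1 <= j)%N -> (j < i)%N -> (i < n)%N -> Y j * E i.+1 = E i.+1 * Y j.
Proof.
move=> h1 h2 h3.
elim: j h1 h2 => [|j IH] h1 h2; first lia.
case: (ltngtP j 0) => hj; first lia.
  rewrite yS //; apply: (G4 hq); first by apply: IH; lia.
  by apply: Ecomm_far; lia.
subst j; rewrite y1.
case: (ltngtP i 2) => hi; first lia.
  apply: (G4 hq); first by apply: xa; lia.
  by apply: Ecomm_1j; lia.
subst i; rewrite xS; last lia.
apply: (G5 hq hq2).
- by rewrite x_comm //; lia.
- by apply: xSr; lia.
- apply: Eserre; rewrite /in_rng; try lia.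
  by case: (ip_13 n3).
Qed.

Lemma EdownE j : Edown q E j j = E j.
Proof. by rewrite /Edown subnn. Qed.
Lemma EdownS j s : (s < j)%N -> Edown q E j s = br q (Edown q E j s.+1) (E s).
Proof.
move=> h; rewrite /Edown (_ : (j - s = (j - s.+1).+1)%N); last lia.
by rewrite /= (_ : (j - (j - s.+1).+1 = s)%N) //; lia.
Qed.
Lemma EupE s : Eup q E s s = E s.
Proof. by rewrite /Eup subnn. Qed.
Lemma EupS s r : (s <= r)%N -> Eup q E s r.+1 = br q (Eup q E s r) (E r.+1).
Proof.
move=> h; rewrite /Eup (_ : (r.+1 - s = (r - s).+1)%N); last lia.
by rewrite /= (_ : (s + (r - s).+1 = r.+1)%N) //; lia.
Qed.

Variables (K : wt n -> A) (T : nat -> {lrmorphism A -> A}).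
Hypotheses (K0 : K 0 = 1)
  (KD : forall mu la, inQ mu -> inQ la -> K (mu + la) = K mu * K la)
  (KE : forall mu i, inQ mu -> in_rng n i ->
        K mu * E i * K (- mu) = q ^ (ip mu (alpha n i)) *: E i)
  (HT : lusztig_rels q E F K (fun i => T i : A -> A)).

Lemma T_br i u v : T i (br q u v) = br q (T i u) (T i v).
Proof. by rewrite /br rmorphB [X in _ - X = _]linearZ_LR !rmorphM. Qed.
Lemma T_fix i j : in_rng n i -> in_rng n j -> ip (alpha n i) (alpha n j) = 0 -> T i (E j) = E j.
Proof. by move=> hi hj h; case: (HT hi) => _ _ H _; apply: H. Qed.
Lemma T_adj i j : in_rng n i -> in_rng n j -> ip (alpha n i) (alpha n j) = -1 ->
  T i (E j) = br q (E i) (E j).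
Proof. by move=> hi hj h; case: (HT hi) => _ _ _ H; apply: H. Qed.

Lemma T_Edn j d : (4 <= j <= n.+1)%N -> (d + 3 <= j.-1)%N ->
  T j (Edn q E j.-1 d) = Edn q E j d.+1.
Proof.
move=> hj; elim: d => [|d IH] hd /=.
  rewrite T_adj; rewrite /in_rng; try lia.
    by rewrite (_ : (j - 1 = j.-1)%N) //; lia.
  case: (@ip_adj n n3 j.-1); try lia.
  by rewrite (_ : j.-1.+1 = j) //; lia.
rewrite T_br IH; last lia.
rewrite T_fix; rewrite /in_rng; try lia.
  by rewrite (_ : (j.-1 - d.+1 = j - d.+2)%N) //; lia.
apply: (ip_far n3); lia.
Qed.

Local Notation eps := (eps q E (fun l => T l : A -> A)).

Lemma eps11 : eps 1 1 = 0.
Proof. by []. Qed.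
Lemma eps12 : eps 1 2 = E 1.
Proof.
rewrite /eps /= T_fix //; rewrite /in_rng; try lia.
by case: (ip_12 n3).
Qed.
Lemma eps1j j : (3 <= j <= n.+1)%N -> eps 1 j = br q (Edown q E j 3) (E 1).
Proof.
move=> hj; rewrite /eps /=.
have -> : (j == 1%N) = false by apply/eqP; lia.
elim: j hj => [|j IH] hj; first lia.
case: (ltngtP j 2) => h; first lia; last first.
  subst j; rewrite /= T_fix; rewrite /in_rng; try lia; last by case: (ip_12 n3).
  rewrite T_adj; rewrite /in_rng; try lia; last by case: (ip_13 n3).
  by rewrite EdownE.
have -> : Tchain (fun l => T l : A -> A) j.+1 (E 1) = T j.+1 (Tchain (fun l => T l : A -> A) j (E 1)).
  by case: j IH hj h => [|[|j]].
rewrite IH; last lia.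
rewrite T_br T_fix; rewrite /in_rng; try lia; last by case: (@ip_1j n n3 j.+1); lia.
rewrite /Edown (_ : (j.+1 - 3 = (j - 3).+1)%N); last lia.
rewrite -T_Edn; try lia.
by [].
Qed.

Lemma epsS i j : (1 <= i)%N -> eps i.+1 j =
  if j == i.+1 then q *: (eps i i.+1 * E i.+1) - q^-1 *: (E i.+1 * eps i i.+1)
  else if j == i then eps i i.+1 + q^-1 *: (eps i i * E i.+1 - E i.+1 * eps i i)
  else br q (eps i j) (E i.+1).
Proof. by case: i. Qed.

Definition homog (mu : wt n) (a : A) :=
  forall la, inQ la -> K la * a = q ^ (ip la mu) *: (a * K la).

Lemma KN mu : inQ mu -> K mu * K (- mu) = 1 /\ K (- mu) * K mu = 1.
Proof.
move=> h; split; rewrite -KD ?inQN //; first by rewrite subrr.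
by rewrite addNr.
Qed.
Lemma Kcomm mu la : inQ mu -> inQ la -> K mu * K la = K la * K mu.
Proof. by move=> h1 h2; rewrite -!KD // addrC. Qed.

Lemma homog_E i : in_rng n i -> homog (alpha n i) (E i).
Proof.
move=> hi la hla; case: (KN hla) => _ h.
by rewrite -[LHS]mulr1 -h !mulrA KE // -scalerAl.
Qed.
Lemma homog_mul mu nu a b : homog mu a -> homog nu b -> homog (mu + nu) (a * b).
Proof.
move=> ha hb la hla; rewrite mulrA ha // -scalerAl -(mulrA a (K la)) hb // -scalerAr scalerA mulrA.
by rewrite ipDr expfzDr.
Qed.
Lemma homog_add mu a b : homog mu a -> homog mu b -> homog mu (a + b).
Proof. by move=> ha hb la hla; rewrite mulrDr ha // hb // mulrDl scalerDr. Qed.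
Lemma homog_scale mu c a : homog mu a -> homog mu (c *: a).
Proof. by move=> ha la hla; rewrite -scalerAr ha // scalerA mulrC -scalerA scalerAl. Qed.
Lemma homog_opp mu a : homog mu a -> homog mu (- a).
Proof. by move=> ha la hla; rewrite mulrN ha // mulNr scalerN. Qed.
Lemma homog_sub mu a b : homog mu a -> homog mu b -> homog mu (a - b).
Proof. by move=> ha hb; apply: homog_add => //; apply: homog_opp. Qed.
Lemma homog_br mu nu a b : homog mu a -> homog nu b -> homog (mu + nu) (br q a b).
Proof.
move=> ha hb; apply: homog_sub; first exact: homog_mul.
by apply: homog_scale; rewrite addrC; apply: homog_mul.
Qed.
Lemma homog_0 mu : homog mu 0.
Proof. by move=> la hla; rewrite mulr0 mul0r scaler0. Qed.
Lemma homog_K nu : inQ nu -> homog 0 (K nu).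
Proof. by move=> h la hla; rewrite ip0r expr0z scale1r Kcomm. Qed.
Lemma homog_eq mu nu a : mu = nu -> homog mu a -> homog nu a.
Proof. by move=> ->. Qed.

Lemma wext (mu la : wt n) : (forall j, mu j = la j) -> mu = la.
Proof. by move=> h; apply/ffunP. Qed.
Ltac wring := refine (wext _) => t; rewrite ?(wD, wN); ring.

Lemma hx j : (1 <= j <= n)%N -> homog (ev n n.+1 - ev n j) (X j).
Proof.
move=> hj.
have [d hd] : exists d, d = (n - j)%N by eexists.
elim: d j hd hj => [|d IH] j hd hj.
  have -> : j = n by lia.
  rewrite xN; apply: (homog_eq _ (homog_E _)); last by rewrite /in_rng; lia.
  by rewrite alphaS //; lia.
rewrite xS; last lia.
apply: (homog_eq _ (homog_br (IH _ _ _) (homog_E _))); try lia; last by rewrite /in_rng; lia.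
rewrite alphaS /=; [wring|lia].
Qed.

Lemma hy j : (1 <= j <= n)%N -> homog (ev n n.+1 + ev n j) (Y j).
Proof.
elim: j => [|j IH] hj; first lia.
case: (ltngtP j 0) => h; first lia.
  rewrite yS //.
  apply: (homog_eq _ (homog_br (IH _) (homog_E _))); try lia; last by rewrite /in_rng; lia.
  rewrite alphaS /=; [wring|lia].
subst j; rewrite y1.
apply: (homog_eq _ (homog_br (hx _) (homog_E _))); try lia; last by rewrite /in_rng; lia.
rewrite alpha1; wring.
Qed.

Lemma hEdown j s : (2 <= s <= j)%N -> (j <= n.+1)%N -> homog (ev n j - ev n s.-1) (Edown q E j s).
Proof.
move=> hs hj.
have [d hd] : exists d, d = (j - s)%N by eexists.
elim: d s hd hs => [|d IH] s hd hs.
  have -> : s = j by lia.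
  rewrite EdownE; apply: (homog_eq _ (homog_E _)); last by rewrite /in_rng; lia.
  by rewrite alphaS //; lia.
rewrite EdownS; last lia.
apply: (homog_eq _ (homog_br (IH _ _ _) (homog_E _))); try lia; last by rewrite /in_rng; lia.
rewrite alphaS /=; last lia.
rewrite (_ : s = s.-1.+1); last lia.
rewrite /=; wring.
Qed.

Lemma hEup s r : (2 <= s <= r)%N -> (r <= n.+1)%N -> homog (ev n r - ev n s.-1) (Eup q E s r).
Proof.
move=> hs; elim: r hs => [|r IH] hs hr; first lia.
case: (ltngtP s r.+1) => h; [|lia|]; last first.
  subst s; rewrite EupE; apply: (homog_eq _ (homog_E _)); last by rewrite /in_rng; lia.
  by rewrite alphaS //; lia.
rewrite EupS; last lia.
apply: (homog_eq _ (homog_br (IH _ _) (homog_E _))); try lia; last by rewrite /in_rng; lia.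
rewrite alphaS /=; [wring|lia].
Qed.

Lemma heps i j : (1 <= i <= n)%N -> (1 <= j <= n)%N -> homog (ev n i + ev n j) (eps i j).
Proof.
elim: i j => [|i IH] j hi hj; first lia.
case: (ltngtP i 0) => h; [lia| |]; last first.
  subst i; case: (ltngtP j 2) => hj2.
  - have -> : j = 1%N by lia.
    by rewrite eps11; apply: homog_0.
  - rewrite eps1j; last lia.
    apply: (homog_eq _ (homog_br (hEdown _ _) (homog_E _))); try lia; last by rewrite /in_rng; lia.
    rewrite alpha1 /=; wring.
  - subst j; rewrite eps12; apply: (homog_eq _ (homog_E _)); last by rewrite /in_rng; lia.
    by rewrite alpha1.
rewrite epsS //.
case: eqP => e1.
  subst j; apply: homog_sub; apply: homog_scale.
    apply: (homog_eq _ (homog_mul (IH _ _ _) (homog_E _))); try lia; last by rewrite /in_rng; lia.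
    rewrite alphaS /=; [wring|lia].
  apply: (homog_eq _ (homog_mul (homog_E _) (IH _ _ _))); try lia; last by rewrite /in_rng; lia.
  rewrite alphaS /=; [wring|lia].
case: eqP => e2.
  subst j; apply: homog_add.
    apply: (homog_eq _ (IH _ _ _)); try lia; wring.
  apply: homog_scale; apply: homog_sub.
    apply: (homog_eq _ (homog_mul (IH _ _ _) (homog_E _))); try lia; last by rewrite /in_rng; lia.
    rewrite alphaS /=; [wring|lia].
  apply: (homog_eq _ (homog_mul (homog_E _) (IH _ _ _))); try lia; last by rewrite /in_rng; lia.
  rewrite alphaS /=; [wring|lia].
apply: (homog_eq _ (homog_br (IH _ _ _) (homog_E _))); try lia; last by rewrite /in_rng; lia.
rewrite alphaS /=; [wring|lia].
Qed.

Variables (B : algType k) (i1 i2 : {lrmorphism A -> B}) (Delta : {lrmorphism A -> B}).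
Hypothesis i12 : forall a b : A, i1 a * i2 b = i2 b * i1 a.
Definition tens (u v : A) : B := i1 u * i2 v.
Hypothesis HDE : forall i, in_rng n i ->
     Delta (E i) = tens (K (- alpha n i)) (E i) + tens (E i) 1.
Hypothesis HDK : forall mu, inQ mu -> Delta (K mu) = tens (K mu) (K mu).

Lemma tensM a b c d : tens a b * tens c d = tens (a * c) (b * d).
Proof. by rewrite /tens mulrA -(mulrA (i1 a)) -i12 mulrA -rmorphM -mulrA -rmorphM. Qed.
Lemma tensDl a b c : tens (a + b) c = tens a c + tens b c.
Proof. by rewrite /tens rmorphD mulrDl. Qed.
Lemma tensDr a b c : tens c (a + b) = tens c a + tens c b.
Proof. by rewrite /tens rmorphD mulrDr. Qed.
Lemma tensZl (s : k) a b : tens (s *: a) b = s *: tens a b.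
Proof. by rewrite /tens linearZ_LR scalerAl. Qed.
Lemma tensZr (s : k) a b : tens a (s *: b) = s *: tens a b.
Proof. by rewrite /tens linearZ_LR scalerAr. Qed.
Lemma tensNl a b : tens (- a) b = - tens a b.
Proof. by rewrite /tens rmorphN mulNr. Qed.
Lemma tensNr a b : tens a (- b) = - tens a b.
Proof. by rewrite /tens rmorphN mulrN. Qed.
Lemma tensBl a b c : tens (a - b) c = tens a c - tens b c.
Proof. by rewrite tensDl tensNl. Qed.
Lemma tensBr a b c : tens c (a - b) = tens c a - tens c b.
Proof. by rewrite tensDr tensNr. Qed.
Lemma tens0l b : tens 0 b = 0.
Proof. by rewrite /tens rmorph0 mul0r. Qed.
Lemma tens0r b : tens b 0 = 0.
Proof. by rewrite /tens rmorph0 mulr0. Qed.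

Lemma Delta_br u v : Delta (br q u v) = br q (Delta u) (Delta v).
Proof. by rewrite /br rmorphB [X in _ - X = _]linearZ_LR !rmorphM. Qed.
Lemma brDl (u v w : B) : br q (u + v) w = br q u w + br q v w.
Proof. by rewrite /br mulrDl mulrDr scalerDr; nc_solve k; fld. Qed.
Lemma brZl (c : k) (u w : B) : br q (c *: u) w = c *: br q u w.
Proof. by rewrite /br -scalerAl -scalerAr scalerBr !scalerA mulrC. Qed.
Lemma br0l (w : B) : br q 0 w = 0.
Proof. by rewrite /br mul0r mulr0 scaler0 subrr. Qed.
Lemma br_sum (I : Type) (r : seq I) (P : pred I) (G : I -> B) w :
  br q (\sum_(j <- r | P j) G j) w = \sum_(j <- r | P j) br q (G j) w.
Proof.
elim/big_rec2: _ => [|j x y _ h]; first exact: br0l.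
by rewrite brDl h.
Qed.

Lemma brT mu a b m : homog mu a -> in_rng n m ->
  br q (tens a b) (Delta (E m)) =
  tens (a * K (- alpha n m)) (b * E m - (q^-1 * q ^ (ip (- alpha n m) mu)) *: (E m * b))
  + tens (br q a (E m)) b.
Proof.
move=> ha hm.
have hK : K (- alpha n m) * a = q ^ (ip (- alpha n m) mu) *: (a * K (- alpha n m)).
  by apply: ha; apply: inQN; apply: inQ_alpha.
rewrite HDE // /br mulrDr mulrDl !tensM hK tensZl mulr1 mul1r.
rewrite tensBr tensZr tensBl tensZl.
nc_solve k; fld.
Qed.

Ltac ipc := rewrite ?alpha1 ?alphaS; try lia; rewrite ?(ipDl, ipDr, ipNl, ipNr) ?ip_ev; try lia; decb; simpl; lia.

Lemma brK a nu m : inQ nu -> in_rng n m ->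
  br q (a * K nu) (E m) = (q ^ (ip nu (alpha n m)) *: (a * E m) - q^-1 *: (E m * a)) * K nu.
Proof.
move=> hnu hm; rewrite /br -mulrA (homog_E hm hnu) mulrBl -!scalerAl !mulrA.
by rewrite -scalerAr mulrA.
Qed.
Lemma brK1 nu m : inQ nu -> in_rng n m ->
  br q (K nu) (E m) = (q ^ (ip nu (alpha n m)) - q^-1) *: (E m * K nu).
Proof.
move=> hnu hm; rewrite -[K nu]mul1r brK // mul1r mulr1 mulrBl -!scalerAl.
by rewrite mul1r scalerBl.
Qed.
Lemma brKt nu b m : inQ nu -> in_rng n m ->
  br q (tens (K nu) b) (Delta (E m)) =
  tens (K (nu - alpha n m)) (br q b (E m)) + tens (br q (K nu) (E m)) b.
Proof.
move=> hnu hm; rewrite (brT _ (homog_K hnu)) // ip0r expr0z mulr1 KD //; apply: inQN; exact: inQ_alpha.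
Qed.

Lemma inQ_degx j : (1 <= j <= n.+1)%N -> inQ (- degx n j).
Proof. by move=> h; apply: inQN; apply: inQ_evB; lia. Qed.
Lemma inQ_degy j : (1 <= j <= n.+1)%N -> inQ (- degy n j).
Proof. by move=> h; apply: inQN; apply: inQ_evD; lia. Qed.

Definition Px i := Delta (X i) = tens (K (- degx n i)) (X i) + tens (X i) 1
      + qhat q *: \sum_(i.+1 <= j < n.+1) tens (Edown q E j i.+1 * K (- degx n j)) (X j).

Lemma PxN : Px n.
Proof.
rewrite /Px big_geq // scaler0 addr0 xN HDE; last by rewrite /in_rng; lia.
by rewrite alphaS //; lia.
Qed.

Lemma PxS i : (1 <= i < n)%N -> Px i.+1 -> Px i.
Proof.
move=> hi; rewrite /Px => IH.
have hin : in_rng n i.+1 by rewrite /in_rng; lia.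
rewrite [in LHS]xS; last lia.
rewrite Delta_br IH !brDl brZl br_sum.
rewrite brKt //; last by apply: inQ_degx; lia.
rewrite -xS; last lia.
rewrite brK1; last by []; last by apply: inQ_degx; lia.
have -> : ip (- degx n i.+1) (alpha n i.+1) = 1 by rewrite /degx; ipc.
have -> : - degx n i.+1 - alpha n i.+1 = - degx n i by rewrite /degx alphaS /=; [wring|lia].
rewrite (brT _ (hx _)) //; last lia.
have -> : ip (- alpha n i.+1) (ev n n.+1 - ev n i.+1) = 1 by ipc.
rewrite expr1z mulVf // scale1r mulr1 mul1r subrr tens0r add0r -xS; last lia.
rewrite (big_ltn (m := i.+1)); last lia.
rewrite EdownE.
rewrite (eq_big_nat _ _ (F2 := fun j => tens (Edown q E j i.+1 * K (- degx n j)) (X j))); last first.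
  move=> j hj.
  rewrite (brT _ (homog_mul (hEdown _ _) (homog_K (inQ_degx _)))); try lia.
  have -> : ip (- alpha n i.+1) (ev n j - ev n i.+2.-1 + 0) = 1 by rewrite addr0; ipc.
  rewrite expr1z mulVf // scale1r x_comm; try lia.
  rewrite subrr tens0r add0r brK; last by []; last by apply: inQ_degx; lia.
  have -> : ip (- degx n j) (alpha n i.+1) = 0 by rewrite /degx; ipc.
  rewrite expr0z scale1r [in RHS]EdownS; [by [] | lia].
rewrite /qhat tensZl.
nc_solve k; fld.
Qed.

Lemma Px_all i : (1 <= i <= n)%N -> Px i.
Proof.
move=> hi; have [d hd] : exists d, d = (n - i)%N by eexists.
elim: d i hd hi => [|d IH] i hd hi.
  have -> : i = n by lia.
  exact: PxN.
apply: PxS; first lia.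
apply: IH; lia.
Qed.

Lemma eps_step i j : (1 <= i < n)%N -> (1 <= j <= n)%N ->
  br q (tens (eps i j * K (- degx n j)) (X j)) (Delta (E i.+1)) =
  tens (eps i.+1 j * K (- degx n j)) (X j)
  + (if j == i.+1 then tens (eps i i.+1 * K (- degx n i)) (X i) else 0)
  - (if j == i then tens (eps i i.+1 * K (- degx n i)) (X i) else 0).
Proof.
move=> hi hj.
have hin : in_rng n i.+1 by rewrite /in_rng; lia.
rewrite (brT _ (homog_mul (heps _ _) (homog_K (inQ_degx _)))) //; try lia.
rewrite brK //; last by apply: inQ_degx; lia.
rewrite epsS; last lia.
case: eqP => e1.
  subst j; rewrite (_ : (i.+1 == i) = false); last by apply/eqP; lia.
  have -> : ip (- alpha n i.+1) (ev n i + ev n i.+1 + 0) = 0 by rewrite addr0; ipc.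
  have -> : ip (- degx n i.+1) (alpha n i.+1) = 1 by rewrite /degx; ipc.
  rewrite expr0z expr1z mulr1 -mulrA -KD; last by apply: inQN; apply: inQ_alpha; lia.
    2: by apply: inQ_degx; lia.
  have -> : - degx n i.+1 - alpha n i.+1 = - degx n i by rewrite /degx alphaS /=; [wring|lia].
  rewrite (_ : X i.+1 * E i.+1 - q^-1 *: (E i.+1 * X i.+1) = X i); last by rewrite [RHS]xS //; lia.
  rewrite subr0 addrC; congr (_ + _).
case: eqP => e2.
  subst j.
  have -> : ip (- alpha n i.+1) (ev n i + ev n i + 0) = 2 by rewrite addr0; ipc.
  have -> : ip (- degx n i) (alpha n i.+1) = -1 by rewrite /degx; ipc.
  rewrite exprN1 (_ : q^-1 * q ^ 2 = q); last first.
    by rewrite -exprnP expr2 mulrA mulVf // mul1r.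
  rewrite xb; last lia.
  rewrite subrr tens0r add0r.
  by rewrite addr0 [in RHS]mulrDl tensDl addrAC subrr add0r scalerBr.
rewrite subr0 addr0.
have -> : ip (- degx n j) (alpha n i.+1) = 0 by rewrite /degx; ipc.
have -> : ip (- alpha n i.+1) (ev n i + ev n j) = 1 by ipc.
rewrite expr0z expr1z mulVf // scale1r scale1r.
case: (ltngtP j i) => h; last by [].
  by rewrite xa ?subrr ?tens0r ?add0r ?addr0 //; lia.
by rewrite x_comm ?subrr ?tens0r ?add0r ?addr0 //; lia.
Qed.

Definition Py i := Delta (Y i) = tens (K (- degy n i)) (Y i) + tens (Y i) 1
  + qhat q *: (\sum_(1 <= j < n.+1) tens (eps i j * K (- degx n j)) (X j)
               + \sum_(1 <= j < i) tens (Eup q E j.+1 i * K (- degy n j)) (Y j)).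

Lemma Py1 : Py 1.
Proof.
rewrite /Py (big_geq (m := 1%N) (n := 1%N)) // addr0.
have hin : in_rng n 1 by rewrite /in_rng; lia.
rewrite [in LHS]y1 Delta_br (Px_all (i := 2)); last lia.
rewrite !brDl brZl br_sum.
rewrite brKt //; last by apply: inQ_degx; lia.
rewrite -y1 brK1; last by []; last by apply: inQ_degx; lia.
have -> : ip (- degx n 2) (alpha n 1) = 1 by rewrite /degx; ipc.
have -> : - degx n 2 - alpha n 1 = - degy n 1 by rewrite /degx /degy alpha1; wring.
rewrite (brT _ (hx _)) //; last lia.
have -> : ip (- alpha n 1) (ev n n.+1 - ev n 2) = 1 by ipc.
rewrite expr1z mulVf // scale1r mulr1 mul1r subrr tens0r add0r -y1.
rewrite (big_ltn (m := 1%N)); last lia.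
rewrite (big_ltn (m := 2%N)); last lia.
rewrite eps11 eps12 mul0r tens0l add0r.
rewrite (eq_big_nat _ _ (F2 := fun j => tens (eps 1 j * K (- degx n j)) (X j))); last first.
  move=> j hj.
  rewrite (brT _ (homog_mul (hEdown _ _) (homog_K (inQ_degx _)))); try lia.
  have -> : ip (- alpha n 1) (ev n j - ev n 3.-1 + 0) = 1 by rewrite addr0; ipc.
  rewrite expr1z mulVf // scale1r x_comm; try lia.
  rewrite subrr tens0r add0r brK; last by []; last by apply: inQ_degx; lia.
  have -> : ip (- degx n j) (alpha n 1) = 0 by rewrite /degx; ipc.
  by rewrite expr0z scale1r eps1j //; lia.
rewrite /qhat tensZl.
nc_solve k; fld.
Qed.

Lemma sum_if m N c (W : B) : (m <= c < N)%N ->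
  \sum_(m <= j < N) (if j == c then W else 0) = W.
Proof. by move=> h; rewrite -big_mkcond big_nat1_eq h. Qed.

Lemma PyS i : (1 <= i < n)%N -> Py i -> Py i.+1.
Proof.
move=> hi; rewrite /Py => IH.
have hin : in_rng n i.+1 by rewrite /in_rng; lia.
rewrite [in LHS]yS; last lia.
rewrite Delta_br IH !brDl brZl brDl !br_sum.
rewrite brKt //; last by apply: inQ_degy; lia.
rewrite -yS; last lia.
rewrite brK1; last by []; last by apply: inQ_degy; lia.
have -> : ip (- degy n i) (alpha n i.+1) = 1 by rewrite /degy; ipc.
have -> : - degy n i - alpha n i.+1 = - degy n i.+1 by rewrite /degy alphaS /=; [wring|lia].
rewrite (brT _ (hy _)) //; last lia.
have -> : ip (- alpha n i.+1) (ev n n.+1 + ev n i) = 1 by ipc.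
rewrite expr1z mulVf // scale1r mulr1 mul1r subrr tens0r add0r -yS; last lia.
rewrite (eq_big_nat _ _ (F2 := fun j => tens (eps i.+1 j * K (- degx n j)) (X j)
  + (if j == i.+1 then tens (eps i i.+1 * K (- degx n i)) (X i) else 0)
  - (if j == i then tens (eps i i.+1 * K (- degx n i)) (X i) else 0))); last first.
  by move=> j hj; apply: eps_step; lia.
rewrite big_split big_split /= sumrN !sum_if; try lia.
rewrite (@eq_big_nat _ _ _ 1 i _ (fun j => tens (Eup q E j.+1 i.+1 * K (- degy n j)) (Y j))); last first.
  move=> j hj.
  rewrite (brT _ (homog_mul (hEup _ _) (homog_K (inQ_degy _)))); try lia.
  have -> : ip (- alpha n i.+1) (ev n i - ev n j.+1.-1 + 0) = 1 by rewrite addr0; ipc.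
  rewrite expr1z mulVf // scale1r yc; try lia.
  rewrite subrr tens0r add0r brK; last by []; last by apply: inQ_degy; lia.
  have -> : ip (- degy n j) (alpha n i.+1) = 0 by rewrite /degy; ipc.
  by rewrite expr0z scale1r [in RHS]EupS //; lia.
rewrite (@big_nat_recr _ _ _ i 1); last lia.
rewrite /= EupE.
rewrite /qhat tensZl.
nc_solve k; fld.
Qed.

Lemma Py_all i : (1 <= i <= n)%N -> Py i.
Proof.
elim: i => [|i IH] hi; first lia.
case: (ltngtP i 0) => h; [lia| |]; last by subst i; exact: Py1.
apply: PyS; first lia.
apply: IH; lia.
Qed.
End M2.

Unset Implicit Arguments.
Set Strict Implicit.
Theorem lemma3p3
  (k : closedFieldType) (k_char0 : [pchar k] =i pred0)
  (q : k) (q_neq0 : q != 0) (q_not_root : forall m : nat, (0 < m)%N -> q ^+ m != 1)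
  (n : nat) (n_ge3 : (3 <= n)%N)
  (A : algType k) (E F : nat -> A) (K : wt n -> A)
  (HU : UqD_rels q E F K)
  (T : nat -> {lrmorphism A -> A}) (T_bij : forall i, bijective (T i))
  (HT : lusztig_rels q E F K (fun i => T i : A -> A))
  (B : algType k) (i1 i2 : {lrmorphism A -> B})
  (i12_comm : forall a b : A, i1 a * i2 b = i2 b * i1 a)
  (Delta : {lrmorphism A -> B})
  (HDE : forall i, in_rng n i ->
     Delta (E i) = i1 (K (- alpha n i)) * i2 (E i) + i1 (E i) * i2 1)
  (HDK : forall mu, inQ mu -> Delta (K mu) = i1 (K mu) * i2 (K mu)) :
  let tens (u v : A) : B := i1 u * i2 v in
  let x := xv q n E in
  let y := yv q n E in
  forall i : nat, (1 <= i <= n)%N ->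
    Delta (x i) =
      tens (K (- degx n i)) (x i) + tens (x i) 1
      + qhat q *: \sum_(i.+1 <= j < n.+1)
                    tens (Edown q E j i.+1 * K (- degx n j)) (x j)
    /\
    Delta (y i) =
      tens (K (- degy n i)) (y i) + tens (y i) 1
      + qhat q *: (\sum_(1 <= j < n.+1)
                      tens (eps q E (fun l => T l : A -> A) i j * K (- degx n j)) (x j)
                   + \sum_(1 <= j < i)
                      tens (Eup q E j.+1 i * K (- degy n j)) (y j)).
Proof.
move=> tens x y i hi.
have hq2 : q + q^-1 != 0.
  apply/negP => /eqP h.
  have h2 : q ^+ 2 = -1.
    have : q * (q + q^-1) = 0 by rewrite h mulr0.
    by rewrite mulrDr mulfV // expr2 => /eqP; rewrite addr_eq0 => /eqP.
  have := q_not_root 4 isT.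
  have -> : q ^+ 4 = (q ^+ 2) ^+ 2 by rewrite -exprM.
  by rewrite h2 sqrrN expr1n eqxx.
case: HU => K0 KD KE _ [Ecm Ese _].
split.
- exact: (Px_all q_neq0 hq2 n_ge3 Ecm K0 KD KE i12_comm HDE hi).
- exact: (Py_all q_neq0 hq2 n_ge3 Ecm Ese K0 KD KE HT i12_comm HDE hi).
Qed.
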